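(* Define functions $b_1,b_2,b_3$ on $\mathbb{R}$ by $b_1(s)=e^{1/s}$ for $s<0$, $b_1(s)=e^{-1/(s-2)}$ for $s>2$, $b_1(s)=0$ otherwise; $b_2(s)=e^{-1/(s(1-s))}$ for $0<s<1$, $b_2(s)=0$ otherwise; $b_3(s)=e^{-1/((s-1)(2-s))}$ for $1<s<2$, $b_3(s)=0$ otherwise. Let $\gamma$ be a curve in $\mathbb{E}^4$ with a Bishop frame $\mathbb{B}$ whose coefficient matrix is $\begin{pmatrix}0&b_1&b_2&b_3\\-b_1&0&0&0\\-b_2&0&0&0\\-b_3&0&0&0\end{pmatrix}$. Then $\gamma$ is a regular curve which does not admit a generalized Bishop frame of type C.
   Context: A regular curve $\gamma: I\to\mathbb{E}^4$ ($I$ an open interval) is considered with arc-length parametrization; $\mathbb{T}=\gamma'$ is its unit tangent vector. A frame on $\gamma$ is an ordered orthonormal frame $(\mathbb{T},\mathbb{Z}_1,\mathbb{Z}_2,\mathbb{Z}_3)$ of smooth vector fields along $\gamma$ whose first vector is $\mathbb{T}$; it is identified with the smooth map $\mathbb{Z}: I\to O(4)$ whose rows are these vectors. Its coefficient matrix is the $\mathfrak{o}(4)$-valued function $X$ with $\mathbb{Z}'=X\mathbb{Z}$. A Bishop frame is a frame whose coefficient matrix has the form given in the claim (with some functions in place of $b_1,b_2,b_3$). A frame is of type C if, after possibly permuting $\mathbb{Z}_1,\mathbb{Z}_2,\mathbb{Z}_3$ (keeping $\mathbb{T}$ first), its coefficient matrix has the form $\begin{pmatrix}0&x_1&x_2&0\\-x_1&0&0&x_3\\-x_2&0&0&0\\0&-x_3&0&0\end{pmatrix}$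 for some smooth functions $x_1,x_2,x_3$. *)

(* Defs.v *)
From HB Require Import structures.
From mathcomp Require Import all_boot all_order all_algebra all_fingroup.
From mathcomp Require Import all_classical all_reals all_analysis.
Set Implicit Arguments. Unset Strict Implicit. Unset Printing Implicit Defensive.
Import Order.TTheory GRing.Theory Num.Theory.
Import numFieldNormedType.Exports.
Local Open Scope ring_scope.

Section Defs.
Variable R : realType.

Definition smooth (f : R -> R) : Prop :=
  forall (n : nat) (x : R), derivable (iter n (@derive1 R R) f) x 1.

Definition b1 (s : R) : R :=
  if s < 0 then expR (1 / s) else if 2 < s then expR (- 1 / (s - 2)) else 0.
Definition b2 (s : R) : R :=
  if (0 < s) && (s < 1) then expR (- 1 / (s * (1 - s))) else 0.
Definition b3 (s : R) : R :=
  if (1 < s) && (s < 2) then expR (- 1 / ((s - 1) * (2 - s))) else 0.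

(* Bishop-form coefficient matrix (rows/cols indexed T, Z1, Z2, Z3) *)
Definition bishop_mx (a b c : R) : 'M[R]_4 :=
  \matrix_(i < 4, j < 4)
    match nat_of_ord i, nat_of_ord j with
    | 0, 1 => a | 0, 2 => b | 0, 3 => c
    | 1, 0 => - a | 2, 0 => - b | 3, 0 => - c
    | _, _ => 0 end.

Definition typeC_mx (x1 x2 x3 : R) : 'M[R]_4 :=
  \matrix_(i < 4, j < 4)
    match nat_of_ord i, nat_of_ord j with
    | 0, 1 => x1 | 0, 2 => x2 | 1, 3 => x3
    | 1, 0 => - x1 | 2, 0 => - x2 | 3, 1 => - x3
    | _, _ => 0 end.

Definition smooth_curve (gamma : R -> 'rV[R]_4) : Prop :=
  forall j : 'I_4, smooth (fun t => gamma t ord0 j).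

Definition regular_curve (gamma : R -> 'rV[R]_4) : Prop :=
  smooth_curve gamma /\
  forall t, exists j : 'I_4, derive1 (fun s => gamma s ord0 j) t != 0.

(* Z is a frame on gamma: rows (T, Z1, Z2, Z3) smooth, orthonormal (Z t in O(4)),
   and the first row is the unit tangent gamma' (arc-length parametrization). *)
Definition is_frame (gamma : R -> 'rV[R]_4) (Z : R -> 'M[R]_4) : Prop :=
  (forall i j : 'I_4, smooth (fun t => Z t i j)) /\
  (forall t, Z t *m (Z t)^T = 1%:M) /\
  (forall (t : R) (j : 'I_4), is_derive t (1:R) (fun s => gamma s ord0 j) (Z t ord0 j)).

Definition coeff_matrix (Z X : R -> 'M[R]_4) : Prop :=
  forall (t : R) (i j : 'I_4), is_derive t (1:R) (fun s => Z s i j) ((X t *m Z t) i j).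

Definition permute_frame (s : 'S_4) (Z : R -> 'M[R]_4) : R -> 'M[R]_4 :=
  fun t => \matrix_(i < 4, j < 4) Z t (s i) j.

(* frame of type C: after permuting Z1,Z2,Z3 (T stays first) the coefficient
   matrix has the type C form for some smooth x1, x2, x3 *)
Definition type_C (Z : R -> 'M[R]_4) : Prop :=
  exists s : 'S_4, s ord0 = ord0 /\
  exists x1 x2 x3 : R -> R, [/\ smooth x1, smooth x2, smooth x3 &
    coeff_matrix (permute_frame s Z) (fun t => typeC_mx (x1 t) (x2 t) (x3 t))].

End Defs.

(* Main.v *)
Require Import Defs.
From HB Require Import structures.
From mathcomp Require Import all_boot all_order all_algebra all_fingroup.
From mathcomp Require Import all_classical all_reals all_analysis.
From mathcomp Require Import ring lra.
Import Order.TTheory GRing.Theory Num.Theory.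
Import numFieldNormedType.Exports.
Local Open Scope ring_scope.
Local Open Scope classical_set_scope.
Local Notation o1 := (@Ordinal 4 1 isT).
Local Notation o2 := (@Ordinal 4 2 isT).
Local Notation o3 := (@Ordinal 4 3 isT).

Lemma sum4 (R : realType) (F : 'I_4 -> R) : \sum_(j < 4) F j = F ord0 + F o1 + F o2 + F o3.
Proof.
rewrite !big_ord_recl big_ord0 addr0 !addrA.
by congr (_ + _ + _ + _); congr F; apply: val_inj.
Qed.

Lemma mul_entry (R : realType) (A M : 'M[R]_4) i k : (A *m M) i k = \sum_j A i j * M j k.
Proof. by rewrite mxE. Qed.

Lemma L_dv (R : realType) (Q : 'M[R]_4) y1 y2 y3 a b c k :
  (k == o1) || (k == o2) || (k == o3) -> Q o2 ord0 = 0 -> Q ord0 k = 0 ->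
  (typeC_mx y1 y2 y3 *m Q + Q *m (bishop_mx a b c)^T) o2 k = 0.
Proof.
move=> hk h1; move: hk => /orP[/orP[]|] /eqP -> h2;
rewrite /typeC_mx /bishop_mx !mxE !sum4 !mxE /= h1 h2; ring.
Qed.

Lemma L_row0 (R : realType) (Q : 'M[R]_4) a b c :
  (bishop_mx a b c *m Q^T) ord0 o3 = a * Q o3 o1 + b * Q o3 o2 + c * Q o3 o3.
Proof. rewrite /bishop_mx !mxE !sum4 !mxE /=; ring. Qed.

Lemma L_typeC03 (R : realType) (y1 y2 y3 : R) : (typeC_mx y1 y2 y3) ord0 o3 = 0.
Proof. by rewrite /typeC_mx mxE. Qed.

Lemma L_QQT (R : realType) (Q : 'M[R]_4) i k : Q *m Q^T = 1%:M ->
  Q i ord0 * Q k ord0 + Q i o1 * Q k o1 + Q i o2 * Q k o2 + Q i o3 * Q k o3 = (i == k)%:R.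
Proof.
move=> h; have := congr1 (fun A : 'M[R]_4 => A i k) h; rewrite !mxE sum4 !mxE => <-.
by [].
Qed.

Lemma row_nz (R : realType) (M : 'M[R]_4) i : M *m M^T = 1%:M -> exists j, M i j != 0.
Proof.
move=> h; apply/existsP; rewrite -negb_forall; apply/negP => /forallP H.
have := @L_QQT _ M i i h; rewrite eqxx.
have /eqP -> := H ord0; have /eqP -> := H o1.
have /eqP -> := H o2; have /eqP -> := H o3.
by rewrite !mul0r !add0r => /eqP; rewrite eq_sym oner_eq0.
Qed.
Lemma deriv_mxT (R : realType) (U V : R -> 'M[R]_4) (t : R) (dU dV : 'M[R]_4) :
 (forall i j, is_derive t 1 (fun s => U s i j) (dU i j)) ->
 (forall i j, is_derive t 1 (fun s => V s i j) (dV i j)) ->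
 forall i k, is_derive t 1 (fun s => (U s *m (V s)^T) i k)
    ((dU *m (V t)^T + U t *m dV^T) i k).
Proof.
move=> hU hV i k.
have -> : (fun s => (U s *m (V s)^T) i k) =
   \sum_(j < 4) ((fun s => U s i j) * (fun s => V s k j)).
  apply/funext => s; rewrite fct_sumE !mxE; apply: eq_bigr => j _.
  by rewrite !mxE.
apply: is_derive_eq.
rewrite !mxE -big_split /=; apply: eq_bigr => j _.
rewrite !mxE /=.
change (U t i j * dV k j + V t k j * dU i j = dU i j * V t k j + U t i j * dV k j).
by rewrite addrC mulrC.
Qed.

Lemma cont_of_derive (R : realType) (f : R -> R) (t d : R) :
  is_derive t (1:R) f d -> {for t, continuous f}.
Proof.
move=> h; apply: differentiable_continuous; rewrite -derivable1_diffP.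
exact: ex_derive.
Qed.

Lemma left_zero (R : realType) (f : R -> R) a l : l < a ->
  {for a, continuous f} -> (forall t, l < t < a -> f t = 0) -> f a = 0.
Proof.
move=> la fc h.
have c1 : f x @[x --> a^'-] --> f a by exact: cvg_at_left_filter.
have c2 : f x @[x --> a^'-] --> (0:R).
  apply: (cvg_near_cst (0:R)).
  near=> x; apply: h; apply/andP; split.
  by near: x; exact: nbhs_left_gt.
  by near: x; exact: nbhs_left_lt.
exact: (cvg_unique _ c1 c2).
Unshelve. all: by end_near.
Qed.

Lemma right_zero (R : realType) (f : R -> R) a u : a < u ->
  {for a, continuous f} -> (forall t, a < t < u -> f t = 0) -> f a = 0.
Proof.
move=> la fc h.
have c1 : f x @[x --> a^'+] --> f a by exact: cvg_at_right_filter.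
have c2 : f x @[x --> a^'+] --> (0:R).
  apply: (cvg_near_cst (0:R)).
  near=> x; apply: h; apply/andP; split.
  by near: x; exact: nbhs_right_gt.
  by near: x; exact: nbhs_right_lt.
exact: (cvg_unique _ c1 c2).
Unshelve. all: by end_near.
Qed.

Lemma is_derive_uniq (R : realType) (f : R -> R) (t a b : R) :
  is_derive t (1:R) f a -> is_derive t (1:R) f b -> a = b.
Proof. by case=> _ <-; case=> _ <-. Qed.

Lemma b_neg (R : realType) (t : R) : t < 0 -> 0 < b1 t /\ b2 t = 0 /\ b3 t = 0.
Proof.
move=> h; rewrite /b1 /b2 /b3 h expR_gt0.
have -> : (0 < t) = false by apply/negbTE; rewrite -leNgt; lra.
have -> : (1 < t) = false by apply/negbTE; rewrite -leNgt; lra.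
by [].
Qed.

Lemma b_big (R : realType) (t : R) : 2 < t -> 0 < b1 t /\ b2 t = 0 /\ b3 t = 0.
Proof.
move=> h; rewrite /b1 /b2 /b3 h.
have -> : (t < 0) = false by apply/negbTE; rewrite -leNgt; lra.
have -> : (t < 1) = false by apply/negbTE; rewrite -leNgt; lra.
have -> : (t < 2) = false by apply/negbTE; rewrite -leNgt; lra.
by rewrite !andbF expR_gt0.
Qed.

Lemma b_01 (R : realType) (t : R) : 0 < t < 1 -> b1 t = 0 /\ 0 < b2 t /\ b3 t = 0.
Proof.
move=> /andP[h1 h2]; rewrite /b1 /b2 /b3 h1 h2.
have -> : (t < 0) = false by apply/negbTE; rewrite -leNgt; lra.
have -> : (2 < t) = false by apply/negbTE; rewrite -leNgt; lra.
have -> : (1 < t) = false by apply/negbTE; rewrite -leNgt; lra.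
by rewrite expR_gt0.
Qed.

Lemma b_12 (R : realType) (t : R) : 1 < t < 2 -> b1 t = 0 /\ b2 t = 0 /\ 0 < b3 t.
Proof.
move=> /andP[h1 h2]; rewrite /b1 /b2 /b3 h1 h2.
have -> : (t < 0) = false by apply/negbTE; rewrite -leNgt; lra.
have -> : (2 < t) = false by apply/negbTE; rewrite -leNgt; lra.
have -> : (t < 1) = false by apply/negbTE; rewrite -leNgt; lra.
by rewrite andbF expR_gt0.
Qed.

Lemma alg_uv (R : realType) (u v : R) : u * v = 0 -> v * v = 1 -> u = 0.
Proof. by move=> h1 h2; rewrite -[u]mulr1 -h2 mulrA h1 mul0r. Qed.

Lemma core (R : realType) (Y B : R -> 'M[R]_4) (x1 x2 x3 : R -> R) :
  (forall t, Y t *m (Y t)^T = 1%:M) ->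
  (forall t, B t *m (B t)^T = 1%:M) ->
  (forall t j, Y t ord0 j = B t ord0 j) ->
  coeff_matrix Y (fun t => typeC_mx (x1 t) (x2 t) (x3 t)) ->
  coeff_matrix B (fun t => bishop_mx (b1 t) (b2 t) (b3 t)) -> False.
Proof.
move=> YO BO Y0 YD BD.
have BTB t : (B t)^T *m B t = 1%:M by exact: mulmx1C.
have Pi0 t i : (Y t *m (B t)^T) i ord0 = (i == ord0)%:R.
  have h := congr1 (fun A : 'M[R]_4 => A i ord0) (YO t); rewrite /= !mxE in h.
  rewrite -h mul_entry; by apply: eq_bigr => j _; rewrite !mxE Y0.
have P0k t k : (Y t *m (B t)^T) ord0 k = (ord0 == k)%:R.
  have h := congr1 (fun A : 'M[R]_4 => A ord0 k) (BO t); rewrite /= !mxE in h.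
  rewrite -h mul_entry; by apply: eq_bigr => j _; rewrite !mxE Y0.
have PPT t : (Y t *m (B t)^T) *m (Y t *m (B t)^T)^T = 1%:M.
  by rewrite trmx_mul trmxK mulmxA -(mulmxA (Y t)) BTB mulmx1 YO.
have PD t i k : is_derive t (1:R) (fun u => (Y u *m (B u)^T) i k)
   ((typeC_mx (x1 t) (x2 t) (x3 t) *m (Y t *m (B t)^T) +
     (Y t *m (B t)^T) *m (bishop_mx (b1 t) (b2 t) (b3 t))^T) i k).
  apply: is_derive_eq; first exact: (@deriv_mxT _ _ _ _ _ _ (YD t) (BD t)).
  by rewrite trmx_mul !mulmxA.
have Pc k t : (k == o1) || (k == o2) || (k == o3) ->
    (Y t *m (B t)^T) o2 k = (Y 0 *m (B 0)^T) o2 k.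
  move=> hk; apply: (@is_derive_0_is_cst _ (fun u => (Y u *m (B u)^T) o2 k)) => u.
  apply: is_derive_eq.
  apply: L_dv. exact: hk.
  exact: (Pi0 u o2).
  move: hk => /orP[/orP[]|] /eqP ->; [exact: (P0k u o1)|exact: (P0k u o2)|exact: (P0k u o3)].
have R0 t j : (bishop_mx (b1 t) (b2 t) (b3 t) *m B t) ord0 j =
              (typeC_mx (x1 t) (x2 t) (x3 t) *m Y t) ord0 j.
  apply: (@is_derive_uniq _ _ _ _ _ (BD t ord0 j)).
  have -> : (fun s => B s ord0 j) = (fun s => Y s ord0 j) by apply/funext => u; rewrite Y0.
  exact: YD.
have F1 t : b1 t * (Y t *m (B t)^T) o3 o1 + b2 t * (Y t *m (B t)^T) o3 o2
          + b3 t * (Y t *m (B t)^T) o3 o3 = 0.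
  have h : (bishop_mx (b1 t) (b2 t) (b3 t) *m B t *m (Y t)^T) ord0 o3 =
           (typeC_mx (x1 t) (x2 t) (x3 t) *m Y t *m (Y t)^T) ord0 o3.
    by rewrite [LHS]mul_entry [RHS]mul_entry; apply: eq_bigr => j _; rewrite R0.
  move: h; rewrite -!mulmxA YO mulmx1 L_typeC03.
  have -> : B t *m (Y t)^T = (Y t *m (B t)^T)^T by rewrite trmx_mul trmxK.
  by rewrite L_row0.
have Pcont t k : {for t, continuous (fun u => (Y u *m (B u)^T) o3 k)}.
  exact: (@cont_of_derive _ _ _ _ (PD t o3 k)).
have P20 t : (Y t *m (B t)^T) o2 ord0 = 0 by exact: (Pi0 t o2).
have P30 t : (Y t *m (B t)^T) o3 ord0 = 0 by exact: (Pi0 t o3).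
have z01 : (Y 0 *m (B 0)^T) o3 o1 = 0.
  apply: (@left_zero _ (fun u => (Y u *m (B u)^T) o3 o1) 0 (-1)); [lra | exact: Pcont | ].
  move=> t /andP[_ ht]; have [hb1 [hb2 hb3]] := @b_neg _ _ ht.
  have := F1 t; rewrite hb2 hb3 !mul0r !addr0 => /eqP; rewrite mulf_eq0 (gt_eqF hb1) /= => /eqP //.
have z02 : (Y 0 *m (B 0)^T) o3 o2 = 0.
  apply: (@right_zero _ (fun u => (Y u *m (B u)^T) o3 o2) 0 1); [lra | exact: Pcont | ].
  move=> t ht; have [hb1 [hb2 hb3]] := @b_01 _ _ ht.
  have := F1 t; rewrite hb1 hb3 !mul0r add0r addr0 => /eqP; rewrite mulf_eq0 (gt_eqF hb2) /= => /eqP //.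
have z12 : (Y 1 *m (B 1)^T) o3 o2 = 0.
  apply: (@left_zero _ (fun u => (Y u *m (B u)^T) o3 o2) 1 0); [lra | exact: Pcont | ].
  move=> t ht; have [hb1 [hb2 hb3]] := @b_01 _ _ ht.
  have := F1 t; rewrite hb1 hb3 !mul0r add0r addr0 => /eqP; rewrite mulf_eq0 (gt_eqF hb2) /= => /eqP //.
have z13 : (Y 1 *m (B 1)^T) o3 o3 = 0.
  apply: (@right_zero _ (fun u => (Y u *m (B u)^T) o3 o3) 1 2); [lra | exact: Pcont | ].
  move=> t ht; have [hb1 [hb2 hb3]] := @b_12 _ _ ht.
  have := F1 t; rewrite hb1 hb2 !mul0r !add0r => /eqP; rewrite mulf_eq0 (gt_eqF hb3) /= => /eqP //.
have z23 : (Y 2 *m (B 2)^T) o3 o3 = 0.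
  apply: (@left_zero _ (fun u => (Y u *m (B u)^T) o3 o3) 2 1); [lra | exact: Pcont | ].
  move=> t ht; have [hb1 [hb2 hb3]] := @b_12 _ _ ht.
  have := F1 t; rewrite hb1 hb2 !mul0r !add0r => /eqP; rewrite mulf_eq0 (gt_eqF hb3) /= => /eqP //.
have z21 : (Y 2 *m (B 2)^T) o3 o1 = 0.
  apply: (@right_zero _ (fun u => (Y u *m (B u)^T) o3 o1) 2 3); [lra | exact: Pcont | ].
  move=> t /andP[ht _]; have [hb1 [hb2 hb3]] := @b_big _ _ ht.
  have := F1 t; rewrite hb2 hb3 !mul0r !addr0 => /eqP; rewrite mulf_eq0 (gt_eqF hb1) /= => /eqP //.
have c3 : (Y 0 *m (B 0)^T) o2 o3 = 0.
  have h33 := @L_QQT _ _ o3 o3 (PPT 0); have h23 := @L_QQT _ _ o2 o3 (PPT 0).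
  rewrite P30 z01 z02 eqxx !mul0r !add0r in h33.
  rewrite P20 P30 z01 z02 !mulr0 !add0r /= in h23.
  exact: (@alg_uv _ _ _ h23 h33).
have c1 : (Y 0 *m (B 0)^T) o2 o1 = 0.
  rewrite -(Pc o1 1) //.
  have h33 := @L_QQT _ _ o3 o3 (PPT 1); have h23 := @L_QQT _ _ o2 o3 (PPT 1).
  rewrite P30 z12 z13 eqxx ?mul0r ?mulr0 !addr0 !add0r in h33.
  rewrite P20 P30 z12 z13 ?mulr0 ?mul0r !addr0 !add0r /= in h23.
  exact: (@alg_uv _ _ _ h23 h33).
have c2 : (Y 0 *m (B 0)^T) o2 o2 = 0.
  rewrite -(Pc o2 2) //.
  have h33 := @L_QQT _ _ o3 o3 (PPT 2); have h23 := @L_QQT _ _ o2 o3 (PPT 2).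
  rewrite P30 z21 z23 eqxx ?mul0r ?mulr0 !addr0 !add0r in h33.
  rewrite P20 P30 z21 z23 ?mulr0 ?mul0r !addr0 !add0r /= in h23.
  exact: (@alg_uv _ _ _ h23 h33).
have := @L_QQT _ _ o2 o2 (PPT 0).
rewrite P20 c1 c2 c3 eqxx !mul0r !add0r => /eqP; by rewrite eq_sym oner_eq0.
Qed.

Local Close Scope classical_set_scope.

Theorem proposition4 (R : realType) (gamma : R -> 'rV[R]_4) (B : R -> 'M[R]_4) :
  smooth_curve gamma ->
  is_frame gamma B ->
  coeff_matrix B (fun t => bishop_mx (b1 t) (b2 t) (b3 t)) ->
  regular_curve gamma /\ ~ (exists Z : R -> 'M[R]_4, is_frame gamma Z /\ type_C Z).
Proof.
move=> sg [Bs [BO BT]] BX; split.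
  split=> // t.
  have [j hj] := @row_nz _ _ ord0 (BO t).
  by exists j; rewrite derive1E; case: (BT t j) => _ ->.
move=> [Z [[Zs [ZO ZT]] [s [s0 [x1 [x2 [x3 [_ _ _ ZC]]]]]]]].
apply: (@core _ (permute_frame s Z) B x1 x2 x3) => //.
- move=> t; apply/matrixP => i k.
  have h := congr1 (fun A : 'M[R]_4 => A (s i) (s k)) (ZO t).
  rewrite /= !mxE (inj_eq perm_inj) in h; rewrite !mxE -h.
  by apply: eq_bigr => j _; rewrite !mxE.
- move=> t j; rewrite /permute_frame mxE s0.
  exact: (@is_derive_uniq _ _ _ _ _ (ZT t j) (BT t j)).
Qed.
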